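(* Let $(\mathcal H,\mathfrak A_0)$ be a Hilbert quasi *-algebra satisfying condition (P), and assume that $\mathcal H^+_{wb}:=\{\xi\in\mathcal H_b:\langle\xi x,x\rangle\ge0\ \forall x\in\mathfrak A_0\}\subseteq\mathcal H^+$. Then $\mathcal H^+=\mathcal H^+_w$.
   Context: A Hilbert algebra is a *-algebra $\mathfrak A_0$ with an inner product $\langle\cdot,\cdot\rangle$ such that (i) for each $x$, $y\mapsto xy$ is continuous for the inner product norm; (ii) $\langle xy,z\rangle=\langle y,x^*z\rangle$ for all $x,y,z$; (iii) $\langle x,y\rangle=\langle y^*,x^*\rangle$ for all $x,y$; (iv) the linear span of $\{xy:x,y\in\mathfrak A_0\}$ is dense in $\mathfrak A_0$. Let $\mathcal H$ be the Hilbert space completion of $\mathfrak A_0$; the involution extends isometrically to $\mathcal H$, and the products $\xi x$, $x\xi$ for $\xi\in\mathcal H$, $x\in\mathfrak A_0$ are defined by continuity. It is assumed that (A): if $\xi\in\mathcal H$ and $\xi x=0$ for all $x\in\mathfrak A_0$ then $\xi=0$. With these operations $(\mathcal H,\mathfrak A_0)$ is called a Hilbert quasi *-algebra. $\xi\in\mathcal H$ is bounded if $x\mapsto\xi x$ is bounded on $\mathfrak A_0$; $\mathcal H_b$ is the set of bounded elements. $\mathfrak A_0^+=\{\sum_{k=1}^n x_k^*x_k: x_k\in\mathfrak A_0,n\in\mathbb N\}$, $\mathcal H^+$ is its norm closure in $\mathcal H$, and $\mathcal H^+_w=\{\xi\in\mathcal H:\langle\xi x,x\rangle\ge0\ \forall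 x\in\mathfrak A_0\}$. A linear functional $\omega$ on $\mathcal H$ is representable if (L.1) $\omega(x^*x)\ge0$ for all $x\in\mathfrak A_0$; (L.2) $\omega(y^*\xi^*x)=\overline{\omega(x^*\xi y)}$ for all $x,y\in\mathfrak A_0$, $\xi\in\mathcal H$; (L.3) for every $\xi\in\mathcal H$ there is $\gamma_\xi>0$ with $|\omega(\xi^*x)|\le\gamma_\xi\,\omega(x^*x)^{1/2}$ for all $x\in\mathfrak A_0$; $\mathcal R_c(\mathcal H,\mathfrak A_0)$ is the set of continuous representable functionals. Condition (P): if $\xi\in\mathcal H$ and $\omega(x^*\xi x)\ge0$ for every $\omega\in\mathcal R_c(\mathcal H,\mathfrak A_0)$ and every $x\in\mathfrak A_0$, then $\xi\in\mathcal H^+$. *)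

(* Defs.v *)
From Stdlib Require Import Reals List.
Import ListNotations.
Open Scope R_scope.

Record C := mkC { Re : R ; Im : R }.
Definition C0 : C := mkC 0 0.
Definition C1 : C := mkC 1 0.
Definition Cadd (a b : C) : C := mkC (Re a + Re b) (Im a + Im b).
Definition Cmul (a b : C) : C :=
  mkC (Re a * Re b - Im a * Im b) (Re a * Im b + Im a * Re b).
Definition Cconj (a : C) : C := mkC (Re a) (- Im a).
Definition Cabs (a : C) : R := sqrt (Re a * Re a + Im a * Im a).
Definition Cnonneg (a : C) : Prop := Im a = 0 /\ 0 <= Re a.

(** * Hilbert quasi *-algebras (H, A0)
   [car] is the Hilbert space H (complex inner product space, complete);
   [A0] is a dense subspace which is a *-algebra (Hilbert algebra axioms
   (i)-(iv)); [mul] restricted to H x A0 and A0 x H is the continuous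
   extension of the product of A0 (it is bounded in the H-variable and agrees
   with the algebra product on A0, hence is uniquely determined); [inv] is the
   isometric extension of the involution of A0.  Values of [mul] when neither
   factor lies in A0 are irrelevant junk and never used.  Condition (A) is
   included. *)
Record HQA := {
  car :> Type;
  vadd : car -> car -> car;
  vzero : car;
  vopp : car -> car;
  vscal : C -> car -> car;
  vadd_assoc : forall x y z, vadd x (vadd y z) = vadd (vadd x y) z;
  vadd_comm : forall x y, vadd x y = vadd y x;
  vadd_0 : forall x, vadd x vzero = x;
  vadd_opp : forall x, vadd x (vopp x) = vzero;
  vscal_1 : forall x, vscal C1 x = x;
  vscal_assoc : forall a b x, vscal a (vscal b x) = vscal (Cmul a b) x;
  vscal_distr_v : forall a x y, vscal a (vadd x y) = vadd (vscal a x) (vscal a y);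
  vscal_distr_s : forall a b x, vscal (Cadd a b) x = vadd (vscal a x) (vscal b x);

  ip : car -> car -> C;
  ip_addl : forall x y z, ip (vadd x y) z = Cadd (ip x z) (ip y z);
  ip_scall : forall a x y, ip (vscal a x) y = Cmul a (ip x y);
  ip_herm : forall x y, ip y x = Cconj (ip x y);
  ip_pos : forall x, Cnonneg (ip x x);
  ip_def : forall x, ip x x = C0 -> x = vzero;

  complete : forall u : nat -> car,
    (forall eps, 0 < eps -> exists N, forall m n, (N <= m)%nat -> (N <= n)%nat ->
        sqrt (Re (ip (vadd (u m) (vopp (u n))) (vadd (u m) (vopp (u n))))) < eps) ->
    exists l, forall eps, 0 < eps -> exists N, forall n, (N <= n)%nat ->
        sqrt (Re (ip (vadd (u n) (vopp l)) (vadd (u n) (vopp l)))) < eps;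

  A0 : car -> Prop;
  A0_zero : A0 vzero;
  A0_add : forall x y, A0 x -> A0 y -> A0 (vadd x y);
  A0_scal : forall a x, A0 x -> A0 (vscal a x);
  A0_dense : forall xi eps, 0 < eps -> exists x, A0 x /\
      sqrt (Re (ip (vadd xi (vopp x)) (vadd xi (vopp x)))) < eps;

  mul : car -> car -> car;
  inv : car -> car;
  A0_mul : forall x y, A0 x -> A0 y -> A0 (mul x y);
  A0_inv : forall x, A0 x -> A0 (inv x);
  mul_assoc : forall x y z, A0 x -> A0 y -> A0 z -> mul x (mul y z) = mul (mul x y) z;
  mul_addl : forall x xi eta, A0 x -> mul (vadd xi eta) x = vadd (mul xi x) (mul eta x);
  mul_scall : forall x a xi, A0 x -> mul (vscal a xi) x = vscal a (mul xi x);
  mul_addr : forall x xi eta, A0 x -> mul x (vadd xi eta) = vadd (mul x xi) (mul x eta);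
  mul_scalr : forall x a xi, A0 x -> mul x (vscal a xi) = vscal a (mul x xi);
  mul_boundl : forall x, A0 x -> exists M, forall xi,
      sqrt (Re (ip (mul xi x) (mul xi x))) <= M * sqrt (Re (ip xi xi));
  mul_boundr : forall x, A0 x -> exists M, forall xi,
      sqrt (Re (ip (mul x xi) (mul x xi))) <= M * sqrt (Re (ip xi xi));
  inv_add : forall xi eta, inv (vadd xi eta) = vadd (inv xi) (inv eta);
  inv_scal : forall a xi, inv (vscal a xi) = vscal (Cconj a) (inv xi);
  inv_inv : forall xi, inv (inv xi) = xi;
  inv_isom : forall xi, ip (inv xi) (inv xi) = ip xi xi;
  inv_mul : forall x y, A0 x -> A0 y -> inv (mul x y) = mul (inv y) (inv x);
  hax_ii : forall x y z, A0 x -> A0 y -> A0 z -> ip (mul x y) z = ip y (mul (inv x) z);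
  hax_iii : forall x y, A0 x -> A0 y -> ip x y = ip (inv y) (inv x);
  hax_iv : forall x eps, A0 x -> 0 < eps -> exists l : list (car * car),
      (forall p, In p l -> A0 (fst p) /\ A0 (snd p)) /\
      let s := fold_right (fun p acc => vadd (mul (fst p) (snd p)) acc) vzero l in
      sqrt (Re (ip (vadd x (vopp s)) (vadd x (vopp s)))) < eps;
  cond_A : forall xi, (forall x, A0 x -> mul xi x = vzero) -> xi = vzero
}.

Section Notions.
Variable X : HQA.

Definition hnorm (xi : car X) : R := sqrt (Re (ip X xi xi)).

Definition bounded_elt (xi : car X) : Prop :=
  exists M, forall x, A0 X x -> hnorm (mul X xi x) <= M * hnorm x.

Definition A0plus (xi : car X) : Prop :=
  exists l : list (car X), (forall x, In x l -> A0 X x) /\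
    xi = fold_right (fun x acc => vadd X (mul X (inv X x) x) acc) (vzero X) l.

Definition Hplus (xi : car X) : Prop :=
  forall eps, 0 < eps -> exists a, A0plus a /\ hnorm (vadd X xi (vopp X a)) < eps.

Definition Hplus_w (xi : car X) : Prop :=
  forall x, A0 X x -> Cnonneg (ip X (mul X xi x) x).

Definition Hplus_wb (xi : car X) : Prop := bounded_elt xi /\ Hplus_w xi.

Definition linear_functional (w : car X -> C) : Prop :=
  (forall xi eta, w (vadd X xi eta) = Cadd (w xi) (w eta)) /\
  (forall a xi, w (vscal X a xi) = Cmul a (w xi)).

Definition representable (w : car X -> C) : Prop :=
  linear_functional w /\
  (forall x, A0 X x -> Cnonneg (w (mul X (inv X x) x))) /\
  (forall x y xi, A0 X x -> A0 X y ->
     w (mul X (mul X (inv X y) (inv X xi)) x) = Cconj (w (mul X (mul X (inv X x) xi) y))) /\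
  (forall xi, exists g, 0 < g /\ forall x, A0 X x ->
     Cabs (w (mul X (inv X xi) x)) <= g * sqrt (Re (w (mul X (inv X x) x)))).

Definition continuous_functional (w : car X -> C) : Prop :=
  exists M, forall xi, Cabs (w xi) <= M * hnorm xi.

Definition Rc (w : car X -> C) : Prop := representable w /\ continuous_functional w.

Definition condP : Prop :=
  forall xi, (forall w, Rc w -> forall x, A0 X x ->
                Cnonneg (w (mul X (mul X (inv X x) xi) x))) -> Hplus xi.

End Notions.

(* Main.v *)
Require Import Defs.
From Stdlib Require Import Reals List Lra Psatz ClassicalEpsilon Classical.
Open Scope R_scope.
Notation C := Defs.C.

Lemma Ceq (a b : C) : Re a = Re b -> Im a = Im b -> a = b.
Proof. destruct a, b; simpl; intros; subst; reflexivity. Qed.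

Ltac csimpl := unfold Cmul, Cadd, Cconj, Defs.C0, Defs.C1 in *; cbn [Re Im] in *.

Lemma Cnonneg_add a b : Cnonneg a -> Cnonneg b -> Cnonneg (Cadd a b).
Proof. unfold Cnonneg; intros [] []; csimpl; split; lra. Qed.

Lemma Cnonneg_conj a : Cnonneg a -> Cnonneg (Cconj a).
Proof. unfold Cnonneg; intros []; csimpl; split; lra. Qed.

Lemma Cconj_conj a : Cconj (Cconj a) = a.
Proof. apply Ceq; csimpl; lra. Qed.

Lemma Cabs_ge0 a : 0 <= Cabs a.
Proof. apply sqrt_pos. Qed.

Lemma Re_le_Cabs a : Rabs (Re a) <= Cabs a.
Proof.
  unfold Cabs. rewrite <- sqrt_Rsqr_abs. apply sqrt_le_1_alt. unfold Rsqr. nra.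
Qed.
Lemma Im_le_Cabs a : Rabs (Im a) <= Cabs a.
Proof.
  unfold Cabs. rewrite <- sqrt_Rsqr_abs. apply sqrt_le_1_alt. unfold Rsqr. nra.
Qed.

Lemma Cabs_sq a : Cabs a * Cabs a = Re a * Re a + Im a * Im a.
Proof. unfold Cabs. apply sqrt_sqrt. nra. Qed.

Lemma Cabs_add a b : Cabs (Cadd a b) <= Cabs a + Cabs b.
Proof.
  pose proof (Cabs_ge0 a); pose proof (Cabs_ge0 b).
  apply Rsqr_incr_0_var; [|lra]. unfold Rsqr.
  rewrite Cabs_sq. csimpl.
  pose proof (Cabs_sq a) as Ea; pose proof (Cabs_sq b) as Eb.
  assert (Re a * Re b + Im a * Im b <= Cabs a * Cabs b).
  { destruct (Rle_or_lt (Re a * Re b + Im a * Im b) 0). nra.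
    apply Rsqr_incr_0_var; [|nra]. unfold Rsqr.
    replace (Cabs a * Cabs b * (Cabs a * Cabs b)) with ((Cabs a * Cabs a) * (Cabs b * Cabs b)) by ring.
    rewrite Ea, Eb. pose proof (Rle_0_sqr (Re a * Im b - Im a * Re b)); unfold Rsqr in *; nra. }
  nra.
Qed.

Lemma Cabs_mul a b : Cabs (Cmul a b) = Cabs a * Cabs b.
Proof.
  unfold Cabs. rewrite <- sqrt_mult; [|nra|nra]. f_equal. csimpl. ring.
Qed.

Lemma Cabs_conj a : Cabs (Cconj a) = Cabs a.
Proof. unfold Cabs; csimpl; f_equal; ring. Qed.

Lemma Cabs_real r : Cabs (mkC r 0) = Rabs r.
Proof. unfold Cabs; cbn [Re Im]. rewrite <- sqrt_Rsqr_abs. f_equal. unfold Rsqr; ring. Qed.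

Lemma Cabs_nonneg a : Cnonneg a -> Cabs a = Re a.
Proof. intros [H1 H2]. unfold Cabs. rewrite H1. replace (Re a * Re a + 0 * 0) with (Rsqr (Re a)) by (unfold Rsqr; ring). apply sqrt_Rsqr; lra. Qed.

Lemma Cabs0 a : Cabs a = 0 -> a = C0.
Proof. intros H. pose proof (Cabs_sq a). rewrite H in H0. apply Ceq; csimpl; nra. Qed.

Lemma Cabs_small a : (forall eps, 0 < eps -> Cabs a < eps) -> a = C0.
Proof.
  intros H. apply Cabs0. pose proof (Cabs_ge0 a).
  destruct (Req_dec (Cabs a) 0); auto. specialize (H (Cabs a)). lra.
Qed.
Section S.
End S.
Definition Copp (a : C) : C := mkC (- Re a) (- Im a).
Definition Cm1 : C := mkC (-1) 0.

Section V.
Context {X : HQA}.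
Implicit Types x y z : car X.

Lemma vadd_0l x : vadd X (vzero X) x = x.
Proof. rewrite vadd_comm. apply vadd_0. Qed.

Lemma vadd_cancel x y z : vadd X x y = vadd X x z -> y = z.
Proof.
  intros H. rewrite <- (vadd_0l y), <- (vadd_0l z).
  rewrite <- (vadd_opp X x). rewrite (vadd_comm X x).
  rewrite <- !vadd_assoc. rewrite H. reflexivity.
Qed.

Lemma vscal_0 x : vscal X C0 x = vzero X.
Proof.
  apply (vadd_cancel (vscal X C0 x)). rewrite vadd_0.
  rewrite <- vscal_distr_s. f_equal. apply Ceq; csimpl; lra.
Qed.

Lemma vscal_zero a : vscal X a (vzero X) = vzero X.
Proof.
  apply (vadd_cancel (vscal X a (vzero X))). rewrite vadd_0.
  rewrite <- vscal_distr_v. rewrite vadd_0. reflexivity.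
Qed.

Lemma vopp_scal x : vopp X x = vscal X Cm1 x.
Proof.
  apply (vadd_cancel x). rewrite vadd_opp.
  rewrite <- (vscal_1 X x) at 1. rewrite <- vscal_distr_s.
  rewrite <- (vscal_0 x). f_equal. apply Ceq; unfold Cm1; csimpl; lra.
Qed.

Lemma vopp_add x y : vopp X (vadd X x y) = vadd X (vopp X x) (vopp X y).
Proof. rewrite !vopp_scal. apply vscal_distr_v. Qed.

Lemma vopp_opp x : vopp X (vopp X x) = x.
Proof. rewrite !vopp_scal, vscal_assoc. rewrite <- (vscal_1 X x) at 2. f_equal. apply Ceq; unfold Cm1; csimpl; lra. Qed.

Lemma vopp_zero : vopp X (vzero X) = vzero X.
Proof. rewrite vopp_scal. apply vscal_zero. Qed.

Lemma vsub_add x y : vadd X (vadd X x (vopp X y)) y = x.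
Proof. rewrite <- vadd_assoc, (vadd_comm X (vopp X y)), vadd_opp, vadd_0. reflexivity. Qed.

Lemma vsub_self x : vadd X x (vopp X x) = vzero X.
Proof. apply vadd_opp. Qed.

Lemma vscal_opp a x : vscal X a (vopp X x) = vopp X (vscal X a x).
Proof. rewrite !vopp_scal, !vscal_assoc. f_equal. apply Ceq; unfold Cm1; csimpl; ring. Qed.

Lemma ip_addr x y z : ip X x (vadd X y z) = Cadd (ip X x y) (ip X x z).
Proof.
  rewrite (ip_herm X (vadd X y z) x), ip_addl, (ip_herm X x y), (ip_herm X x z).
  apply Ceq; csimpl; lra.
Qed.

Lemma ip_scalr a x y : ip X x (vscal X a y) = Cmul (Cconj a) (ip X x y).
Proof.
  rewrite (ip_herm X (vscal X a y) x), ip_scall, (ip_herm X x y).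
  apply Ceq; csimpl; ring.
Qed.

Lemma ip_0l y : ip X (vzero X) y = C0.
Proof. rewrite <- (vscal_0 y), ip_scall. apply Ceq; csimpl; ring. Qed.

Lemma ip_0r y : ip X y (vzero X) = C0.
Proof. rewrite <- (vscal_0 y), ip_scalr. apply Ceq; csimpl; ring. Qed.

Lemma ip_oppl x y : ip X (vopp X x) y = Copp (ip X x y).
Proof. rewrite vopp_scal, ip_scall. apply Ceq; unfold Copp, Cm1; csimpl; ring. Qed.

Lemma ip_oppr x y : ip X x (vopp X y) = Copp (ip X x y).
Proof. rewrite vopp_scal, ip_scalr. apply Ceq; unfold Copp, Cm1; csimpl; ring. Qed.

Definition nsq x := Re (ip X x x).

Lemma nsq_ge0 x : 0 <= nsq x.
Proof. apply (ip_pos X x). Qed.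

Lemma ip_self x : ip X x x = mkC (nsq x) 0.
Proof. apply Ceq; simpl; [reflexivity| apply (ip_pos X x)]. Qed.

Lemma hnorm_sq x : hnorm X x * hnorm X x = nsq x.
Proof. unfold hnorm. apply sqrt_sqrt. apply nsq_ge0. Qed.

Lemma hnorm_ge0 x : 0 <= hnorm X x.
Proof. apply sqrt_pos. Qed.

Lemma nsq0 x : nsq x = 0 -> x = vzero X.
Proof. intros H. apply ip_def. rewrite ip_self, H. reflexivity. Qed.

Lemma hnorm0 x : hnorm X x = 0 -> x = vzero X.
Proof. intros H. apply nsq0. rewrite <- hnorm_sq, H. ring. Qed.

Lemma hnorm_zero : hnorm X (vzero X) = 0.
Proof. unfold hnorm. rewrite ip_0l. simpl. apply sqrt_0. Qed.

Lemma expand a x y :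
  nsq (vadd X x (vscal X a y)) =
  nsq x + 2 * (Re a * Re (ip X y x) - Im a * Im (ip X y x)) + (Re a * Re a + Im a * Im a) * nsq y.
Proof.
  unfold nsq. rewrite ip_addl, !ip_addr, !ip_scall, !ip_scalr.
  rewrite (ip_herm X x y). rewrite (ip_self y). csimpl. unfold nsq. ring.
Qed.

Lemma nsq_scal a x : nsq (vscal X a x) = (Re a * Re a + Im a * Im a) * nsq x.
Proof. unfold nsq. rewrite ip_scall, ip_scalr, ip_self. csimpl. unfold nsq; ring. Qed.

Lemma hnorm_scal a x : hnorm X (vscal X a x) = Cabs a * hnorm X x.
Proof. unfold hnorm, Cabs. rewrite <- sqrt_mult; [|nra|apply nsq_ge0]. f_equal. apply nsq_scal. Qed.

Lemma hnorm_opp x : hnorm X (vopp X x) = hnorm X x.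
Proof. rewrite vopp_scal, hnorm_scal. unfold Cm1. rewrite Cabs_real. replace (Rabs (-1)) with 1 by (unfold Rabs; destruct Rcase_abs; lra). ring. Qed.

Lemma hnorm_inv x : hnorm X (inv X x) = hnorm X x.
Proof. unfold hnorm. rewrite inv_isom. reflexivity. Qed.

Lemma CS x y : Cabs (ip X x y) <= hnorm X x * hnorm X y.
Proof.
  pose proof (hnorm_ge0 x); pose proof (hnorm_ge0 y).
  destruct (Req_dec (nsq y) 0) as [Hy|Hy].
  { apply nsq0 in Hy. subst. rewrite ip_0r. unfold Cabs; csimpl.
    replace (0*0+0*0) with 0 by ring. rewrite sqrt_0. nra. }
  pose proof (nsq_ge0 y).
  set (c := ip X x y).
  set (t := / nsq y).
  pose proof (nsq_ge0 (vadd X x (vscal X (mkC (- t * Re c) (- t * Im c)) y))) as P.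
  rewrite expand in P. cbn [Re Im] in P.
  rewrite (ip_herm X x y) in P. fold c in P. csimpl.
  assert (Hc : Re c * Re c + Im c * Im c <= nsq x * nsq y).
  { assert (Ht : t * nsq y = 1) by (unfold t; field; auto).
    assert (0 < t) by (unfold t; apply Rinv_0_lt_compat; lra).
    assert (0 <= nsq x - t * (Re c * Re c + Im c * Im c)).
    { replace (nsq x - t * (Re c * Re c + Im c * Im c)) with
        (nsq x + 2 * (- t * Re c * Re c - - t * Im c * - Im c) +
          (- t * Re c * (- t * Re c) + - t * Im c * (- t * Im c)) * nsq y).
      exact P.
      replace (- t * Re c * (- t * Re c) + - t * Im c * (- t * Im c)) with (t * t * (Re c * Re c + Im c * Im c)) by ring.
      replace (t * t * (Re c * Re c + Im c * Im c) * nsq y) with (t * (Re c * Re c + Im c * Im c) * (t * nsq y)) by ring.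
      rewrite Ht. ring. }
    assert (E : (nsq x - t * (Re c * Re c + Im c * Im c)) * nsq y = nsq x * nsq y - (Re c * Re c + Im c * Im c) * (t * nsq y)) by ring.
    rewrite Ht in E.
    assert (0 <= (nsq x - t * (Re c * Re c + Im c * Im c)) * nsq y) by (apply Rmult_le_pos; lra).
    lra. }
  apply Rsqr_incr_0_var; [|nra]. unfold Rsqr.
  rewrite Cabs_sq.
  replace (hnorm X x * hnorm X y * (hnorm X x * hnorm X y)) with ((hnorm X x * hnorm X x) * (hnorm X y * hnorm X y)) by ring.
  rewrite !hnorm_sq. exact Hc.
Qed.

Lemma hnorm_triangle x y : hnorm X (vadd X x y) <= hnorm X x + hnorm X y.
Proof.
  pose proof (hnorm_ge0 x); pose proof (hnorm_ge0 y).
  apply Rsqr_incr_0_var; [|nra]. unfold Rsqr.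
  rewrite hnorm_sq.
  rewrite <- (vscal_1 X y). rewrite expand. rewrite vscal_1.
  pose proof (CS y x). pose proof (Re_le_Cabs (ip X y x)).
  unfold Defs.C1; cbn [Re Im].
  rewrite <- !hnorm_sq.
  assert (Re (ip X y x) <= hnorm X y * hnorm X x) by (pose proof (Rle_abs (Re (ip X y x))); lra).
  nra.
Qed.

Lemma hnorm_sub_sym x y : hnorm X (vadd X x (vopp X y)) = hnorm X (vadd X y (vopp X x)).
Proof.
  rewrite <- hnorm_opp, vopp_add, vopp_opp, vadd_comm. reflexivity.
Qed.

Lemma hnorm_sub_tri x y z :
  hnorm X (vadd X x (vopp X z)) <= hnorm X (vadd X x (vopp X y)) + hnorm X (vadd X y (vopp X z)).
Proof.
  replace (vadd X x (vopp X z)) with (vadd X (vadd X x (vopp X y)) (vadd X y (vopp X z))).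
  apply hnorm_triangle.
  rewrite <- vadd_assoc, (vadd_assoc X (vopp X y)), (vadd_comm X (vopp X y) y), vadd_opp, vadd_0l. reflexivity.
Qed.

Lemma Cnonneg_ip_self x : Cnonneg (ip X x x).
Proof. apply ip_pos. Qed.

End V.
Section L.
Context {X : HQA}.
Implicit Types x y z : car X.

Lemma Cabs_opp a : Cabs (Copp a) = Cabs a.
Proof. unfold Cabs, Copp; cbn [Re Im]; f_equal; ring. Qed.

Lemma lf_opp f x : linear_functional X f -> f (vopp X x) = Copp (f x).
Proof. intros [_ Hs]. rewrite vopp_scal, Hs. apply Ceq; unfold Cm1, Copp; csimpl; ring. Qed.

Lemma lf_zero f : linear_functional X f -> f (vzero X) = C0.
Proof. intros [_ Hs]. rewrite <- (vscal_0 (vzero X)), Hs. apply Ceq; csimpl; ring. Qed.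

Lemma lf_split f x a : linear_functional X f -> f x = Cadd (f (vadd X x (vopp X a))) (f a).
Proof. intros Hf. rewrite <- (proj1 Hf (vadd X x (vopp X a)) a). rewrite vsub_add. reflexivity. Qed.

Lemma bound_abs f K : (forall x, Cabs (f x) <= K * hnorm X x) -> forall x, Cabs (f x) <= Rabs K * hnorm X x.
Proof. intros H x. specialize (H x). pose proof (Rle_abs K). pose proof (hnorm_ge0 x). nra. Qed.

Lemma dense_ext f g :
  linear_functional X f -> linear_functional X g ->
  (exists K, forall x, Cabs (f x) <= K * hnorm X x) ->
  (exists K, forall x, Cabs (g x) <= K * hnorm X x) ->
  (forall a, A0 X a -> f a = g a) -> forall x, f x = g x.
Proof.
  intros Hf Hg [K HK] [K' HK'] Ha x.
  pose proof (bound_abs f K HK) as HKa; pose proof (bound_abs g K' HK') as HKb; clear HK HK'; rename HKa into HK; rename HKb into HK'.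
  assert (Hd : Cadd (f x) (Copp (g x)) = C0).
  { apply Cabs_small. intros eps He.
    set (L := Rabs K + Rabs K' + 1).
    assert (HL : 0 < L) by (unfold L; pose proof (Rabs_pos K); pose proof (Rabs_pos K'); lra).
    destruct (A0_dense X x (eps / L)) as [a [Ha0 Hn]]. apply Rdiv_lt_0_compat; lra.
    fold (hnorm X (vadd X x (vopp X a))) in Hn.
    rewrite (lf_split f x a Hf), (lf_split g x a Hg), (Ha a Ha0).
    set (h := hnorm X (vadd X x (vopp X a))) in *.
    specialize (HK (vadd X x (vopp X a))). specialize (HK' (vadd X x (vopp X a))). fold h in HK, HK'.
    replace (Cadd (Cadd (f (vadd X x (vopp X a))) (g a)) (Copp (Cadd (g (vadd X x (vopp X a))) (g a))))
      with (Cadd (f (vadd X x (vopp X a))) (Copp (g (vadd X x (vopp X a))))) by (apply Ceq; unfold Copp; csimpl; ring).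
    eapply Rle_lt_trans. apply Cabs_add. rewrite Cabs_opp.
    assert (h * L < eps). { apply (Rmult_lt_compat_r L) in Hn; auto. unfold Rdiv in Hn. rewrite Rmult_assoc, Rinv_l in Hn by lra. lra. }
    pose proof (hnorm_ge0 (vadd X x (vopp X a))). fold h in H0.
    pose proof (Rabs_pos K); pose proof (Rabs_pos K'). unfold L in H. nra. }
  apply Ceq; assert (E1 := f_equal Re Hd); assert (E2 := f_equal Im Hd); unfold Copp in *; csimpl; lra.
Qed.

Lemma closure_nonneg f (P : car X -> Prop) x :
  linear_functional X f ->
  (exists K, forall x, Cabs (f x) <= K * hnorm X x) ->
  (forall eps, 0 < eps -> exists a, P a /\ hnorm X (vadd X x (vopp X a)) < eps) ->
  (forall a, P a -> Cnonneg (f a)) -> Cnonneg (f x).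
Proof.
  intros Hf [K HK0] Happ HP. pose proof (bound_abs f K HK0) as HK; clear HK0.
  assert (Hmain : forall eps, 0 < eps -> Rabs (Im (f x)) < eps /\ - eps < Re (f x)).
  { intros eps He. set (L := Rabs K + 1).
    assert (HL : 0 < L) by (unfold L; pose proof (Rabs_pos K); lra).
    destruct (Happ (eps / L)) as [a [Pa Hn]]. apply Rdiv_lt_0_compat; lra.
    destruct (HP a Pa) as [I1 R1].
    rewrite (lf_split f x a Hf). csimpl.
    set (v := vadd X x (vopp X a)) in *.
    specialize (HK v).
    assert (hnorm X v * L < eps). { apply (Rmult_lt_compat_r L) in Hn; auto. unfold Rdiv in Hn. rewrite Rmult_assoc, Rinv_l in Hn by lra. lra. }
    pose proof (hnorm_ge0 v). pose proof (Rabs_pos K).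
    pose proof (Re_le_Cabs (f v)). pose proof (Im_le_Cabs (f v)).
    assert (Cabs (f v) < eps) by (unfold L in H; nra).
    rewrite I1, Rplus_0_r. split. lra.
    pose proof (Rle_abs (- Re (f v))). rewrite Rabs_Ropp in H5. lra. }
  split.
  - destruct (Req_dec (Im (f x)) 0); auto.
    destruct (Hmain (Rabs (Im (f x)))) as [A _]. apply Rabs_pos_lt; auto. lra.
  - destruct (Rle_or_lt 0 (Re (f x))); auto.
    destruct (Hmain (- Re (f x))) as [_ A]; lra.
Qed.

End L.
Section A.
Context {X : HQA}.
Implicit Types x y z : car X.

Lemma mul_zero_l x : A0 X x -> mul X (vzero X) x = vzero X.
Proof. intros Hx. rewrite <- (vscal_0 (vzero X)) at 1. rewrite mul_scall by auto. apply vscal_0. Qed.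

Lemma mul_opp_l x v : A0 X x -> mul X (vopp X v) x = vopp X (mul X v x).
Proof. intros Hx. rewrite !vopp_scal, mul_scall by auto. reflexivity. Qed.

Lemma boundl x : A0 X x -> exists M, forall v, hnorm X (mul X v x) <= M * hnorm X v.
Proof. intros Hx. destruct (mul_boundl X x Hx) as [M HM]. exists M. exact HM. Qed.
Lemma boundr x : A0 X x -> exists M, forall v, hnorm X (mul X x v) <= M * hnorm X v.
Proof. intros Hx. destruct (mul_boundr X x Hx) as [M HM]. exists M. exact HM. Qed.

Lemma lf_ipl v : linear_functional X (fun z => ip X z v).
Proof. split; intros; [apply ip_addl | apply ip_scall]. Qed.

Lemma bd_ipl v : exists K, forall z, Cabs (ip X z v) <= K * hnorm X z.
Proof. exists (hnorm X v). intros z. rewrite Rmult_comm. apply CS. Qed.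

Lemma L1 z y v : A0 X y -> A0 X v -> ip X (mul X y z) v = ip X z (mul X (inv X y) v).
Proof.
  intros Hy Hv. revert z.
  apply (dense_ext (fun z => ip X (mul X y z) v) (fun z => ip X z (mul X (inv X y) v))).
  - split; intros; simpl. rewrite mul_addr, ip_addl; auto. rewrite mul_scalr, ip_scall; auto.
  - apply lf_ipl.
  - destruct (boundr y Hy) as [M HM]. exists (M * hnorm X v). intros z.
    eapply Rle_trans. apply CS. pose proof (HM z). pose proof (hnorm_ge0 v). nra.
  - apply bd_ipl.
  - intros a Ha. apply hax_ii; auto.
Qed.

Lemma R1_A0 z y u : A0 X z -> A0 X y -> A0 X u -> ip X (mul X z y) u = ip X z (mul X u (inv X y)).
Proof.
  intros Hz Hy Hu.
  rewrite hax_iii by (auto using A0_mul).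
  rewrite inv_mul by auto.
  rewrite <- hax_ii by (auto using A0_inv).
  rewrite hax_iii by (auto using A0_mul, A0_inv).
  rewrite inv_inv, inv_mul, inv_inv by (auto using A0_inv). reflexivity.
Qed.

Lemma R1 z y u : A0 X y -> A0 X u -> ip X (mul X z y) u = ip X z (mul X u (inv X y)).
Proof.
  intros Hy Hu. revert z.
  apply (dense_ext (fun z => ip X (mul X z y) u) (fun z => ip X z (mul X u (inv X y)))).
  - split; intros; simpl. rewrite mul_addl, ip_addl; auto. rewrite mul_scall, ip_scall; auto.
  - apply lf_ipl.
  - destruct (boundl y Hy) as [M HM]. exists (M * hnorm X u). intros z.
    eapply Rle_trans. apply CS. pose proof (HM z). pose proof (hnorm_ge0 u). nra.
  - apply bd_ipl.
  - intros a Ha. apply R1_A0; auto.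
Qed.

Lemma A0plus_nonneg a x : A0plus X a -> A0 X x -> Cnonneg (ip X (mul X a x) x).
Proof.
  intros [l [Hl ->]] Hx. induction l as [|y l IH]; simpl.
  - rewrite mul_zero_l, ip_0l by auto. split; simpl; lra.
  - assert (Hy : A0 X y) by (apply Hl; left; auto).
    rewrite mul_addl, ip_addl by auto. apply Cnonneg_add.
    + rewrite <- mul_assoc by (auto using A0_inv).
      rewrite hax_ii, inv_inv by (auto using A0_inv, A0_mul). apply ip_pos.
    + apply IH. intros; apply Hl; right; auto.
Qed.

Lemma dir1 xi : Hplus X xi -> Hplus_w X xi.
Proof.
  intros Hp x Hx.
  apply (closure_nonneg (fun z => ip X (mul X z x) x) (A0plus X) xi).
  - split; intros; simpl. rewrite mul_addl, ip_addl; auto. rewrite mul_scall, ip_scall; auto.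
  - destruct (boundl x Hx) as [M HM]. exists (M * hnorm X x). intros z.
    eapply Rle_trans. apply CS. pose proof (HM z). pose proof (hnorm_ge0 x). nra.
  - exact Hp.
  - intros a Ha. apply A0plus_nonneg; auto.
Qed.

End A.
Section R.
Context {X : HQA}.
Implicit Types x y z : car X.

Lemma vadd_swap a b c d : vadd X (vadd X a b) (vadd X c d) = vadd X (vadd X a c) (vadd X b d).
Proof.
  rewrite <- !vadd_assoc. f_equal. rewrite !vadd_assoc. f_equal. apply vadd_comm.
Qed.

Lemma vopp_vscal a x : vopp X (vscal X a x) = vscal X (Copp a) x.
Proof. rewrite vopp_scal, vscal_assoc. f_equal. apply Ceq; unfold Cm1, Copp; csimpl; ring. Qed.

Lemma nsq_sym x y : nsq (vadd X x (vopp X y)) = nsq (vadd X y (vopp X x)).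
Proof. rewrite <- !hnorm_sq, hnorm_sub_sym. reflexivity. Qed.

Lemma parallelogram a b : nsq (vadd X a b) + nsq (vadd X a (vopp X b)) = 2 * nsq a + 2 * nsq b.
Proof.
  rewrite <- (vscal_1 X b) at 1. rewrite vopp_scal. rewrite !expand.
  unfold Cm1, Defs.C1; cbn [Re Im]. ring.
Qed.

Lemma nsq_scal_real r x : nsq (vscal X (mkC r 0) x) = r * r * nsq x.
Proof. rewrite nsq_scal; cbn [Re Im]; ring. Qed.

Lemma lf_add f x y : linear_functional X f -> f (vadd X x y) = Cadd (f x) (f y).
Proof. intros [H _]; apply H. Qed.
Lemma lf_scal f a x : linear_functional X f -> f (vscal X a x) = Cmul a (f x).
Proof. intros [_ H]; apply H. Qed.

Lemma inv_small eps : 0 < eps -> exists N, forall n, (N <= n)%nat -> / (INR n + 1) < eps.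
Proof.
  intros He. destruct (archimed (/ eps)) as [Ha _].
  assert (0 < / eps) by (apply Rinv_0_lt_compat; auto).
  destruct (IZN (up (/ eps))) as [N HN]. { apply le_IZR. lra. }
  rewrite HN, <- INR_IZR_INZ in Ha. exists N. intros n Hn. apply le_INR in Hn.
  rewrite <- (Rinv_inv eps). apply Rinv_lt_contravar. nra. lra.
Qed.

Lemma riesz w : linear_functional X w -> (exists M, forall x, Cabs (w x) <= M * hnorm X x) ->
  exists eta, forall z, w z = ip X z eta.
Proof.
  intros Hw [M0 HM0]. pose proof (bound_abs w M0 HM0) as HM. set (M := Rabs M0) in HM.
  assert (HM0' : 0 <= M) by apply Rabs_pos. clearbody M. clear HM0 M0.
  destruct (classic (exists x, w x <> C0)) as [[x0 Hx0]|Hall].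
  2:{ exists (vzero X). intros z. rewrite ip_0r. apply NNPP. intros H. apply Hall. exists z. auto. }
  set (c := w x0) in *.
  set (nc := Re c * Re c + Im c * Im c).
  assert (Hnc : nc <> 0).
  { intros E. apply Hx0. apply Ceq; csimpl; unfold nc in E; nra. }
  set (x1 := vscal X (mkC (Re c / nc) (- Im c / nc)) x0).
  assert (Hw1 : w x1 = Defs.C1).
  { unfold x1. rewrite lf_scal by auto. fold c. apply Ceq; csimpl; unfold nc in *; field; auto. }
  set (K := fun k => w k = C0).
  assert (K0 : K (vzero X)) by (apply lf_zero; auto).
  set (E := fun r => exists k, K k /\ r = - nsq (vadd X x1 (vopp X k))).
  assert (HEb : bound E). { exists 0. intros r [k [_ ->]]. pose proof (nsq_ge0 (vadd X x1 (vopp X k))). lra. }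
  assert (HEne : exists r, E r) by (exists (- nsq (vadd X x1 (vopp X (vzero X)))); exists (vzero X); auto).
  destruct (completeness E HEb HEne) as [s [Hs1 Hs2]].
  set (D := - s).
  assert (HD1 : forall k, K k -> D <= nsq (vadd X x1 (vopp X k))).
  { intros k Hk. unfold D. assert (E (- nsq (vadd X x1 (vopp X k)))) by (exists k; auto). apply Hs1 in H. lra. }
  assert (HD2 : forall d, 0 < d -> exists k, K k /\ nsq (vadd X x1 (vopp X k)) < D + d).
  { intros d Hd. apply NNPP. intros Hn.
    assert (is_upper_bound E (s - d)).
    { intros r [k [Hk ->]]. destruct (Rle_or_lt (- nsq (vadd X x1 (vopp X k))) (s - d)); auto.
      exfalso. apply Hn. exists k. split; auto. unfold D. lra. }
    apply Hs2 in H. lra. }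
  assert (HD0 : 0 <= D).
  { assert (s <= 0). { apply Hs2. intros r [k [_ ->]]. pose proof (nsq_ge0 (vadd X x1 (vopp X k))). lra. } unfold D; lra. }
  assert (Hex : forall n : nat, exists k, K k /\ nsq (vadd X x1 (vopp X k)) < D + / (INR n + 1)).
  { intros n. apply HD2. apply Rinv_0_lt_compat. pose proof (pos_INR n). lra. }
  set (ks := fun n => proj1_sig (constructive_indefinite_description _ (Hex n))).
  assert (Hks : forall n, K (ks n) /\ nsq (vadd X x1 (vopp X (ks n))) < D + / (INR n + 1)).
  { intros n. unfold ks. destruct (constructive_indefinite_description _ (Hex n)) as [k Hk]. exact Hk. }
  assert (Hpar : forall k k', K k -> K k' ->
            nsq (vadd X k (vopp X k')) <= 2 * nsq (vadd X x1 (vopp X k)) + 2 * nsq (vadd X x1 (vopp X k')) - 4 * D).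
  { intros k k' Hk Hk'.
    set (a := vadd X x1 (vopp X k)). set (b := vadd X x1 (vopp X k')).
    pose proof (parallelogram a b) as P.
    assert (Eab : vadd X a (vopp X b) = vadd X k' (vopp X k)).
    { unfold a, b. rewrite vopp_add, vopp_opp. rewrite vadd_swap, vadd_opp, vadd_0l. apply vadd_comm. }
    set (m := vscal X (mkC (/2) 0) (vadd X k k')).
    assert (Km : K m). { unfold K, m. rewrite lf_scal, lf_add by auto. rewrite Hk, Hk'. apply Ceq; csimpl; ring. }
    assert (Eab2 : vadd X a b = vscal X (mkC 2 0) (vadd X x1 (vopp X m))).
    { unfold a, b, m. rewrite vadd_swap. rewrite (vopp_vscal (mkC (/2) 0)).
      rewrite (vscal_distr_v X (mkC 2 0) x1). rewrite vscal_assoc.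
      replace (Cmul (mkC 2 0) (Copp (mkC (/ 2) 0))) with Cm1 by (apply Ceq; unfold Cm1, Copp; csimpl; field).
      rewrite <- vopp_scal, vopp_add. f_equal.
      replace (mkC 2 0) with (Cadd Defs.C1 Defs.C1) by (apply Ceq; csimpl; lra).
      rewrite vscal_distr_s, vscal_1. reflexivity. }
    rewrite Eab, Eab2, nsq_scal_real in P. rewrite (nsq_sym k' k) in P.
    pose proof (HD1 m Km). lra. }
  assert (Hcauchy : forall eps, 0 < eps -> exists N, forall m n, (N <= m)%nat -> (N <= n)%nat ->
        sqrt (Re (ip X (vadd X (ks m) (vopp X (ks n))) (vadd X (ks m) (vopp X (ks n))))) < eps).
  { intros eps He.
    destruct (inv_small (eps * eps / 4)) as [N HN]. nra.
    exists N. intros m n Hm Hn.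
    fold (nsq (vadd X (ks m) (vopp X (ks n)))).
    rewrite <- sqrt_Rsqr by lra. apply sqrt_lt_1_alt. split. apply nsq_ge0.
    destruct (Hks m) as [Km Hm']. destruct (Hks n) as [Kn Hn'].
    pose proof (Hpar _ _ Km Kn). pose proof (HN m Hm). pose proof (HN n Hn).
    unfold Rsqr. lra. }
  destruct (complete X ks Hcauchy) as [l Hl].
  assert (Kl : K l).
  { unfold K. apply Cabs_small. intros eps He.
    destruct (Hl (eps / (M + 1))) as [N HN]. apply Rdiv_lt_0_compat; lra.
    specialize (HN N (le_n N)). fold (hnorm X (vadd X (ks N) (vopp X l))) in HN.
    rewrite (lf_split w l (ks N) Hw). destruct (Hks N) as [KN _]. rewrite KN.
    replace (Cadd (w (vadd X l (vopp X (ks N)))) C0) with (w (vadd X l (vopp X (ks N)))) by (apply Ceq; csimpl; ring).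
    eapply Rle_lt_trans. apply HM. rewrite hnorm_sub_sym.
    assert (hnorm X (vadd X (ks N) (vopp X l)) * (M + 1) < eps).
    { apply (Rmult_lt_compat_r (M + 1)) in HN; [|lra]. unfold Rdiv in HN. rewrite Rmult_assoc, Rinv_l in HN by lra. lra. }
    pose proof (hnorm_ge0 (vadd X (ks N) (vopp X l))). nra. }
  set (z := vadd X x1 (vopp X l)).
  assert (Hz : nsq z <= D).
  { assert (Hsm : forall eps, 0 < eps -> eps <= 1 -> nsq z < D + eps * (2 * D + 6)).
    { intros eps He He1.
      destruct (Hl eps He) as [N1 HN1]. destruct (inv_small eps He) as [N2 HN2].
      set (n := Nat.max N1 N2).
      specialize (HN1 n (Nat.le_max_l _ _)). specialize (HN2 n (Nat.le_max_r _ _)).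
      fold (hnorm X (vadd X (ks n) (vopp X l))) in HN1.
      destruct (Hks n) as [_ Hn].
      pose proof (hnorm_sub_tri x1 (ks n) l) as T. fold z in T.
      set (a := hnorm X (vadd X x1 (vopp X (ks n)))) in *.
      set (b := hnorm X (vadd X (ks n) (vopp X l))) in *.
      pose proof (hnorm_sq (vadd X x1 (vopp X (ks n)))) as Ea. fold a in Ea.
      pose proof (hnorm_ge0 (vadd X x1 (vopp X (ks n)))) as Ga. fold a in Ga.
      pose proof (hnorm_ge0 (vadd X (ks n) (vopp X l))) as Gb. fold b in Gb.
      pose proof (hnorm_ge0 z). rewrite <- hnorm_sq.
      assert (a < D + 2) by nra.
      assert (hnorm X z * hnorm X z <= (a + b) * (a + b)) by nra.
      nra. }
    destruct (Rle_or_lt (nsq z) D) as [|Hgt]; auto.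
    set (e := Rmin 1 ((nsq z - D) / (2 * D + 7))).
    assert (0 < e). { unfold e. apply Rmin_glb_lt. lra. apply Rdiv_lt_0_compat; lra. }
    assert (e <= 1) by (unfold e; apply Rmin_l).
    assert (e * (2 * D + 7) <= nsq z - D).
    { assert (e <= (nsq z - D) / (2 * D + 7)) by (unfold e; apply Rmin_r).
      apply (Rmult_le_compat_r (2 * D + 7)) in H1; [|lra]. unfold Rdiv in H1.
      rewrite Rmult_assoc, Rinv_l in H1 by lra. lra. }
    specialize (Hsm e H H0). nra. }
  assert (Horth : forall v, K v -> ip X v z = C0).
  { intros v Kv. set (p := Re (ip X v z)). set (q := Im (ip X v z)).
    set (t := / (nsq v + 1)).
    pose proof (nsq_ge0 v) as Gv.
    assert (Ht : 0 < t) by (unfold t; apply Rinv_0_lt_compat; lra).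
    assert (Ht1 : t * nsq v < 1).
    { unfold t. apply (Rmult_lt_reg_r (nsq v + 1)); [lra|].
      rewrite Rmult_assoc, (Rmult_comm (nsq v)), <- Rmult_assoc, Rinv_l by lra. lra. }
    set (a := mkC (- t * p) (t * q)).
    assert (Kk : K (vadd X l (vscal X (Copp a) v))).
    { unfold K. rewrite lf_add, lf_scal by auto. rewrite Kl, Kv. apply Ceq; csimpl; ring. }
    pose proof (HD1 _ Kk) as P.
    replace (vadd X x1 (vopp X (vadd X l (vscal X (Copp a) v)))) with (vadd X z (vscal X a v)) in P.
    2:{ unfold z. rewrite vopp_add, vopp_vscal, vadd_assoc. f_equal. f_equal. apply Ceq; unfold Copp; cbn [Re Im]; ring. }
    rewrite expand in P. unfold a in P; cbn [Re Im] in P. fold p q in P.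
    assert (t * (p * p + q * q) * (t * nsq v - 2) >= 0) by nra.
    assert (p * p + q * q <= 0).
    { destruct (Rle_or_lt (p * p + q * q) 0); auto.
      assert (t * (p * p + q * q) > 0) by nra. nra. }
    apply Ceq; csimpl; fold p q; nra. }
  assert (Hwz : w z = Defs.C1).
  { unfold z. rewrite lf_add, lf_opp, Hw1, Kl by auto. apply Ceq; unfold Copp; csimpl; ring. }
  assert (Hnz : 0 < nsq z).
  { pose proof (nsq_ge0 z). destruct (Req_dec (nsq z) 0) as [E0|]; [|lra].
    apply nsq0 in E0. rewrite E0, lf_zero in Hwz by auto. apply (f_equal Re) in Hwz. csimpl. lra. }
  exists (vscal X (mkC (/ nsq z) 0) z). intros y.
  set (u := vadd X y (vscal X (Copp (w y)) z)).
  assert (Ku : K u). { unfold K, u. rewrite lf_add, lf_scal, Hwz by auto. apply Ceq; unfold Copp; csimpl; ring. }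
  pose proof (Horth u Ku) as O. unfold u in O. rewrite ip_addl, ip_scall, ip_self in O.
  rewrite ip_scalr.
  apply Ceq; assert (O1 := f_equal Re O); assert (O2 := f_equal Im O); unfold Copp in *; csimpl; field_simplify; try lra.
  - apply (Rmult_eq_reg_r (nsq z)); [|lra]. field_simplify; lra.
  - apply (Rmult_eq_reg_r (nsq z)); [|lra]. field_simplify; lra.
Qed.

End R.
Section B.
Context {X : HQA}.
Implicit Types x y z : car X.

Lemma baire (P : nat -> car X -> Prop) :
  (forall x, exists n, P n x) ->
  (forall n x, ~ P n x -> exists d, 0 < d /\ forall y, hnorm X (vadd X y (vopp X x)) < d -> ~ P n y) ->
  exists n c r, 0 < r /\ forall x, hnorm X (vadd X x (vopp X c)) < r -> P n x.
Proof.
  intros Hcov Hopen. apply NNPP. intros Hno.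
  assert (H : forall n c r, 0 < r -> exists x, hnorm X (vadd X x (vopp X c)) < r /\ ~ P n x).
  { intros n c r Hr. apply NNPP. intros Hne. apply Hno. exists n, c, r. split; auto.
    intros x Hx. apply NNPP. intros Hp. apply Hne. exists x. auto. }
  assert (Hstep : forall (n : nat) (p : car X * R), exists q : car X * R, 0 < snd p ->
     0 < snd q /\ snd q <= snd p / 2 /\ snd q <= / (INR n + 2) /\
     hnorm X (vadd X (fst q) (vopp X (fst p))) <= snd p / 2 /\
     forall y, hnorm X (vadd X y (vopp X (fst q))) <= snd q -> ~ P n y).
  { intros n [c r]. simpl. destruct (Rlt_or_le 0 r) as [Hr|Hr].
    2:{ exists (vzero X, 1). intros; lra. }
    destruct (H n c (r / 2)) as [x [Hx Hpx]]. lra.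
    destruct (Hopen n x Hpx) as [d [Hd Hdx]].
    assert (0 < / (INR n + 2)) by (apply Rinv_0_lt_compat; pose proof (pos_INR n); lra).
    exists (x, Rmin (Rmin (d / 2) (r / 2)) (/ (INR n + 2))). simpl. intros _.
    pose proof (Rmin_l (Rmin (d / 2) (r / 2)) (/ (INR n + 2))).
    pose proof (Rmin_r (Rmin (d / 2) (r / 2)) (/ (INR n + 2))).
    pose proof (Rmin_l (d / 2) (r / 2)). pose proof (Rmin_r (d / 2) (r / 2)).
    repeat split; try lra.
    - apply Rmin_glb_lt; auto. apply Rmin_glb_lt; lra.
    - intros y Hy. apply Hdx. lra. }
  set (step := fun n p => proj1_sig (constructive_indefinite_description _ (Hstep n p))).
  assert (Hst : forall n p, 0 < snd p ->
     0 < snd (step n p) /\ snd (step n p) <= snd p / 2 /\ snd (step n p) <= / (INR n + 2) /\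
     hnorm X (vadd X (fst (step n p)) (vopp X (fst p))) <= snd p / 2 /\
     forall y, hnorm X (vadd X y (vopp X (fst (step n p)))) <= snd (step n p) -> ~ P n y).
  { intros n p. unfold step. destruct (constructive_indefinite_description _ (Hstep n p)) as [q Hq]. exact Hq. }
  set (sq := fix f (k : nat) : car X * R := match k with O => (vzero X, 1) | S k => step k (f k) end).
  set (c := fun k => fst (sq k)). set (r := fun k => snd (sq k)).
  assert (Hr : forall k, 0 < r k /\ r k <= / (INR k + 1)).
  { induction k. - unfold r; simpl. rewrite Rplus_0_l, Rinv_1. lra.
    - destruct IHk as [A B]. destruct (Hst k (sq k) A) as [A1 [A2 [A3 _]]].
      unfold r. change (snd (sq (S k))) with (snd (step k (sq k))). split; auto. rewrite S_INR. replace (INR k + 1 + 1) with (INR k + 2) by ring. exact A3. }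
  assert (Hc : forall k j, hnorm X (vadd X (c (k + j)%nat) (vopp X (c k))) <= r k - r (k + j)%nat).
  { intros k j. induction j.
    - rewrite Nat.add_0_r, vadd_opp, hnorm_zero. lra.
    - rewrite Nat.add_succ_r. destruct (Hr (k + j)%nat) as [A _].
      destruct (Hst (k + j)%nat (sq (k + j)%nat) A) as [A1 [A2 [_ [A4 _]]]].
      eapply Rle_trans. apply (hnorm_sub_tri _ (c (k + j)%nat)).
      unfold c, r in *. change (fst (sq (S (k + j)))) with (fst (step (k + j)%nat (sq (k + j)%nat))).
      change (snd (sq (S (k + j)))) with (snd (step (k + j)%nat (sq (k + j)%nat))). lra. }
  assert (Hc' : forall k m, (k <= m)%nat -> hnorm X (vadd X (c m) (vopp X (c k))) <= r k).
  { intros k m Hkm. replace m with (k + (m - k))%nat by lia. pose proof (Hc k (m - k)%nat).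
    pose proof (proj1 (Hr (k + (m - k))%nat)). lra. }
  assert (Hcauchy : forall eps, 0 < eps -> exists N, forall m n, (N <= m)%nat -> (N <= n)%nat ->
        sqrt (Re (ip X (vadd X (c m) (vopp X (c n))) (vadd X (c m) (vopp X (c n))))) < eps).
  { intros eps He. destruct (inv_small (eps / 2)) as [N HN]. lra.
    exists N. intros m n Hm Hn. fold (hnorm X (vadd X (c m) (vopp X (c n)))).
    eapply Rle_lt_trans. apply (hnorm_sub_tri _ (c N)).
    rewrite (hnorm_sub_sym (c N)).
    pose proof (Hc' N m Hm). pose proof (Hc' N n Hn). pose proof (HN N (le_n N)). pose proof (proj2 (Hr N)). lra. }
  destruct (complete X c Hcauchy) as [L HL].
  destruct (Hcov L) as [n Pn].
  assert (Hclose : hnorm X (vadd X L (vopp X (c (S n)))) <= r (S n)).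
  { destruct (Rle_or_lt (hnorm X (vadd X L (vopp X (c (S n))))) (r (S n))) as [|Hgt]; auto.
    exfalso. set (e := hnorm X (vadd X L (vopp X (c (S n)))) - r (S n)).
    destruct (HL e) as [N HN]. unfold e; lra.
    set (m := Nat.max N (S n)). specialize (HN m (Nat.le_max_l _ _)). fold (hnorm X (vadd X (c m) (vopp X L))) in HN.
    pose proof (hnorm_sub_tri L (c m) (c (S n))).
    rewrite (hnorm_sub_sym L (c m)) in H0. pose proof (Hc' (S n) m (Nat.le_max_r _ _)). unfold e in HN. lra. }
  destruct (Hr n) as [A _]. destruct (Hst n (sq n) A) as [_ [_ [_ [_ A5]]]].
  apply (A5 L); auto.
Qed.

End B.
Section F.
Context {X : HQA}.
Implicit Types x y z : car X.

Lemma R1full z u y : A0 X y -> ip X (mul X z y) u = ip X z (mul X u (inv X y)).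
Proof.
  intros Hy.
  assert (E : forall u, ip X u (mul X z y) = ip X (mul X u (inv X y)) z).
  { apply (dense_ext (fun u => ip X u (mul X z y)) (fun u => ip X (mul X u (inv X y)) z)).
    - apply lf_ipl.
    - split; intros; simpl. rewrite mul_addl, ip_addl; auto using A0_inv. rewrite mul_scall, ip_scall; auto using A0_inv.
    - apply bd_ipl.
    - destruct (boundl (inv X y) (A0_inv X y Hy)) as [M HM]. exists (M * hnorm X z). intros v.
      eapply Rle_trans. apply CS. pose proof (HM v). pose proof (hnorm_ge0 z). nra.
    - intros a Ha. rewrite (ip_herm X (mul X z y) a), R1 by auto. rewrite (ip_herm X z (mul X a (inv X y))). reflexivity. }
  rewrite (ip_herm X u (mul X z y)), E. rewrite <- ip_herm. reflexivity.
Qed.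

Lemma comp_nonneg xi x y : Hplus_w X xi -> A0 X x -> A0 X y ->
  Cnonneg (ip X (mul X (mul X (inv X x) xi) x) (mul X (inv X y) y)).
Proof.
  intros Hxi Hx Hy.
  rewrite R1 by (auto using A0_mul, A0_inv).
  rewrite L1, inv_inv by (auto using A0_mul, A0_inv).
  set (z := mul X x (inv X y)).
  assert (Hz : A0 X z) by (unfold z; auto using A0_mul, A0_inv).
  replace (mul X x (mul X (mul X (inv X y) y) (inv X x))) with (mul X z (inv X z)).
  - rewrite <- R1 by auto. apply Hxi; auto.
  - unfold z. rewrite inv_mul, inv_inv by (auto using A0_inv).
    rewrite <- (mul_assoc X (inv X y) y (inv X x)) by (auto using A0_inv).
    rewrite (mul_assoc X x (inv X y)) by (auto using A0_inv, A0_mul). reflexivity.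
Qed.

Lemma A0plus_comp xi x a : Hplus_w X xi -> A0 X x -> A0plus X a ->
  Cnonneg (ip X a (mul X (mul X (inv X x) xi) x)).
Proof.
  intros Hxi Hx [l [Hl ->]]. induction l as [|y l IH]; simpl.
  - rewrite ip_0l. split; simpl; lra.
  - assert (Hy : A0 X y) by (apply Hl; left; auto).
    rewrite ip_addl. apply Cnonneg_add.
    + rewrite ip_herm. apply Cnonneg_conj. apply comp_nonneg; auto.
    + apply IH. intros; apply Hl; right; auto.
Qed.

Lemma Cabs_sub_le a b : Cabs a <= Cabs (Cadd b a) + Cabs b.
Proof.
  replace a with (Cadd (Cadd b a) (Copp b)) at 1 by (apply Ceq; unfold Copp; csimpl; ring).
  eapply Rle_trans. apply Cabs_add. rewrite Cabs_opp. lra.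
Qed.

Lemma inv_sub_split x y : inv X x = vadd X (inv X (vadd X x (vopp X y))) (inv X y).
Proof. rewrite <- inv_add, vsub_add. reflexivity. Qed.

Lemma Rc_bound w : Rc X w -> exists C, 0 <= C /\ forall xi x, A0 X x ->
  Cabs (w (mul X (inv X xi) x)) <= C * hnorm X xi * sqrt (Re (w (mul X (inv X x) x))).
Proof.
  intros [[Hlin [HL1 [HL2 HL3]]] [M0 HM0]].
  pose proof (bound_abs w M0 HM0) as HM. set (M := Rabs M0) in HM.
  assert (HM0' : 0 <= M) by apply Rabs_pos. clearbody M. clear HM0 M0.
  set (s := fun x => sqrt (Re (w (mul X (inv X x) x)))).
  assert (Hs : forall x, 0 <= s x) by (intros; apply sqrt_pos).
  set (Pn := fun (n : nat) xi => forall x, A0 X x -> Cabs (w (mul X (inv X xi) x)) <= INR n * s x).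
  assert (Hcov : forall xi, exists n, Pn n xi).
  { intros xi. destruct (HL3 xi) as [g [Hg Hgx]].
    destruct (archimed g) as [Ha _]. destruct (IZN (up g)) as [n HN]. { apply le_IZR. lra. }
    rewrite HN, <- INR_IZR_INZ in Ha. exists n. intros x Hx. eapply Rle_trans. apply Hgx; auto.
    pose proof (Hs x). fold (s x). nra. }
  assert (Hopen : forall n xi, ~ Pn n xi -> exists d, 0 < d /\ forall y, hnorm X (vadd X y (vopp X xi)) < d -> ~ Pn n y).
  { intros n xi Hn. unfold Pn in Hn.
    apply not_all_ex_not in Hn. destruct Hn as [x Hx].
    apply imply_to_and in Hx. destruct Hx as [Hx Hlt]. apply Rnot_le_lt in Hlt.
    destruct (boundl x Hx) as [Mx0 HMx0].
    assert (HMx : forall v, hnorm X (mul X v x) <= Rabs Mx0 * hnorm X v).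
    { intros v. pose proof (HMx0 v). pose proof (Rle_abs Mx0). pose proof (hnorm_ge0 v). nra. }
    set (Mx := Rabs Mx0) in HMx. assert (0 <= Mx) by apply Rabs_pos. clearbody Mx.
    set (gap := Cabs (w (mul X (inv X xi) x)) - INR n * s x).
    exists (gap / (M * Mx + 1)). split. apply Rdiv_lt_0_compat; unfold gap; nra.
    intros y Hy Py. specialize (Py x Hx).
    rewrite (inv_sub_split y xi), mul_addl, lf_add in Py by auto.
    set (v := vadd X y (vopp X xi)) in *.
    pose proof (Cabs_sub_le (w (mul X (inv X xi) x)) (w (mul X (inv X v) x))).
    pose proof (HM (mul X (inv X v) x)). pose proof (HMx (inv X v)). rewrite hnorm_inv in H2.
    assert (hnorm X v * (M * Mx + 1) < gap).
    { apply (Rmult_lt_compat_r (M * Mx + 1)) in Hy; [|nra]. unfold Rdiv in Hy. rewrite Rmult_assoc, Rinv_l in Hy by nra. lra. }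
    pose proof (hnorm_ge0 v). pose proof (hnorm_ge0 (mul X (inv X v) x)).
    assert (Cabs (w (mul X (inv X v) x)) <= M * Mx * hnorm X v) by nra.
    unfold gap in H3. nra. }
  destruct (baire Pn Hcov Hopen) as [n [c [r [Hr Hball]]]].
  exists (4 * INR n / r). split. { apply Rmult_le_pos. pose proof (pos_INR n); lra. apply Rlt_le, Rinv_0_lt_compat; auto. }
  intros xi x Hx.
  assert (Hd : forall d, 0 < d -> Cabs (w (mul X (inv X xi) x)) <= 4 * INR n / r * (hnorm X xi + d) * s x).
  { intros d Hd. pose proof (hnorm_ge0 xi).
    set (t := r / (2 * (hnorm X xi + d))).
    assert (Ht : 0 < t) by (unfold t; apply Rdiv_lt_0_compat; lra).
    assert (Ht2 : t * (hnorm X xi + d) = r / 2) by (unfold t; field; lra).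
    set (y := vadd X c (vscal X (mkC t 0) xi)).
    assert (Py : Pn n y).
    { apply Hball. unfold y. rewrite (vadd_comm X c), <- vadd_assoc, vadd_opp, vadd_0.
      rewrite hnorm_scal, Cabs_real, Rabs_right by lra. nra. }
    assert (Pc : Pn n c). { apply Hball. rewrite vadd_opp, hnorm_zero. auto. }
    specialize (Py x Hx). specialize (Pc x Hx).
    unfold y in Py. rewrite inv_add, inv_scal, mul_addl, mul_scall, lf_add, lf_scal in Py by auto.
    pose proof (Cabs_sub_le (Cmul (Cconj (mkC t 0)) (w (mul X (inv X xi) x))) (w (mul X (inv X c) x))).
    rewrite Cabs_mul, Cabs_conj, Cabs_real, Rabs_right in H0 by lra.
    assert (t * Cabs (w (mul X (inv X xi) x)) <= 2 * INR n * s x) by lra.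
    assert (E : 4 * INR n / r * (hnorm X xi + d) * s x = 2 * INR n * s x / t).
    { unfold t. field. split; lra. }
    rewrite E. apply (Rmult_le_reg_l t); auto. replace (t * (2 * INR n * s x / t)) with (2 * INR n * s x) by (field; lra). lra. }
  fold (s x). set (W := Cabs (w (mul X (inv X xi) x))) in *.
  set (K := 4 * INR n / r) in *.
  assert (0 <= K) by (unfold K; apply Rmult_le_pos; [pose proof (pos_INR n); lra| apply Rlt_le, Rinv_0_lt_compat; auto]).
  destruct (Rle_or_lt W (K * hnorm X xi * s x)) as [|Hgt]; auto.
  exfalso. pose proof (Hs x).
  destruct (Req_dec (K * s x) 0) as [E0|NE0].
  { specialize (Hd 1 Rlt_0_1). nra. }
  assert (0 < K * s x) by nra.
  specialize (Hd ((W - K * hnorm X xi * s x) / (2 * (K * s x)))).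
  assert (0 < (W - K * hnorm X xi * s x) / (2 * (K * s x))) by (apply Rdiv_lt_0_compat; lra).
  specialize (Hd H2).
  assert (K * (hnorm X xi + (W - K * hnorm X xi * s x) / (2 * (K * s x))) * s x = K * hnorm X xi * s x + (W - K * hnorm X xi * s x) / 2).
  { field. split; intro Z; rewrite Z in H1; lra. }
  lra.
Qed.

End F.

Theorem mainTheorem14 (X : HQA) :
  condP X ->
  (forall xi : car X, Hplus_wb X xi -> Hplus X xi) ->
  forall xi : car X, Hplus X xi <-> Hplus_w X xi.
Proof.
  intros HP Hyp xi. split. apply dir1.
  intros Hw. apply HP. intros w Hrc x Hx.
  destruct (Rc_bound w Hrc) as [C [HC0 HC]].
  destruct Hrc as [[Hlin [HL1 [HL2 HL3]]] Hcont].
  destruct (riesz w Hlin Hcont) as [eta Heta].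
  assert (Hew : Hplus_w X eta).
  { intros z Hz. rewrite R1 by (auto using A0_inv, A0_mul).
    rewrite ip_herm, <- Heta. apply Cnonneg_conj.
    pose proof (HL1 (inv X z) (A0_inv X z Hz)). rewrite inv_inv in H. exact H. }
  assert (Heb : bounded_elt X eta).
  { exists (C * C). intros z Hz.
    specialize (HC (inv X (mul X eta z)) (inv X z) (A0_inv X z Hz)).
    rewrite !inv_inv, hnorm_inv in HC.
    rewrite Heta, R1full, inv_inv in HC by (auto using A0_inv).
    rewrite Cabs_nonneg in HC by apply ip_pos. fold (nsq (mul X eta z)) in HC.
    rewrite Heta in HC.
    set (N := hnorm X (mul X eta z)) in *.
    rewrite <- (hnorm_sq (mul X eta z)) in HC. fold N in HC.
    assert (ER : ip X (mul X z (inv X z)) eta = Cconj (ip X (mul X eta z) z)).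
    { rewrite (R1 eta z z) by auto. apply ip_herm. }
    rewrite ER in HC.
    set (R := Re (Cconj (ip X (mul X eta z) z))) in *.
    assert (HR0 : 0 <= R). { unfold R. pose proof (Hew z Hz) as [_ A]. csimpl. lra. }
    assert (HR : R <= N * hnorm X z).
    { unfold R. csimpl. pose proof (CS (mul X eta z) z). pose proof (Re_le_Cabs (ip X (mul X eta z) z)).
      pose proof (Rle_abs (Re (ip X (mul X eta z) z))). fold N in H. lra. }
    pose proof (sqrt_sqrt R HR0). pose proof (sqrt_pos R).
    set (S := sqrt R) in *.
    pose proof (hnorm_ge0 (mul X eta z)). fold N in H1.
    pose proof (hnorm_ge0 z).
    destruct (Req_dec N 0) as [E0|NZ].
    { rewrite E0. nra. }
    assert (N <= C * S) by nra.
    assert (N * N <= C * C * (S * S)) by nra.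
    rewrite H in H4. nra. }
  assert (Hpe : Hplus X eta) by (apply Hyp; split; auto).
  rewrite Heta, ip_herm. apply Cnonneg_conj.
  apply (closure_nonneg (fun u => ip X u (mul X (mul X (inv X x) xi) x)) (A0plus X) eta).
  - apply lf_ipl.
  - apply bd_ipl.
  - exact Hpe.
  - intros a Ha. apply A0plus_comp; auto.
Qed.
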